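(* Let $k\in\mathbb{P}$, $b\geq 2$ an integer, and $M\in\mathbb{N}$. Suppose $X'=(x_1',\dots,x_k')$ and $X=(x_1,\dots,x_k)$ are the greedy presentations of integers $r_1,r_2\in\{0,1,\dots,M\}$ respectively. If $X'\preceq X$, then $w(r_1)\leq w(r_2)$.
   Context: $\mathbb{P}$ denotes the positive integers, $\mathbb{N}$ the nonnegative integers. Let $B_i=\frac{b^i-1}{b-1}$ for $1\le i\le k$. The greedy presentation of $N\in\mathbb{N}$ is the tuple $(x_1,\dots,x_k)\in\mathbb{N}^k$ with $\sum_i B_i x_i=N$ obtained by the greedy algorithm (take $x_k$ maximal, then $x_{k-1}$ maximal for the remainder, etc.); equivalently it satisfies $x_k=\lfloor (b-1)N/(b^k-1)\rfloor$, $x_i\in\{0,\dots,b\}$ for $1\le i\le k-1$, and if $2\le i\le k-1$ and $x_i=b$ then $x_1=\cdots=x_{i-1}=0$. The weight of $N$ is $w(N)=\sum_{i=1}^k b^i x_i$ where $(x_i)$ is its greedy presentation. The colexicographic order $\preceq$ on tuples: $(x_1',\dots,x_k')\preceq(x_1,\dots,x_k)$ iff either $x_i'=x_i$ for all $i$, or there is $j$ with $x_j'<x_j$ and $x_i'=x_i$ for all $i>j$. *)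

(* Defs.v *)
From mathcomp Require Import all_boot.
Set Implicit Arguments. Unset Strict Implicit. Unset Printing Implicit Defensive.

Definition Bnum (b i : nat) : nat := (b ^ i - 1) %/ (b - 1).

Fixpoint greedy_aux (b i N : nat) : seq nat :=
  (* returns [:: x_1; ...; x_i] for the remainder N *)
  match i with
  | 0 => [::]
  | i'.+1 => rcons (greedy_aux b i' (N %% Bnum b i)) (N %/ Bnum b i)
  end.

Definition greedy (b k N : nat) (i : nat) : nat :=
  nth 0 (greedy_aux b k N) i.-1.

Definition weight (b k N : nat) : nat :=
  \sum_(1 <= i < k.+1) b ^ i * greedy b k N i.

Definition colex_le (k : nat) (x' x : nat -> nat) : Prop :=
  (forall i, 1 <= i <= k -> x' i = x i) \/
  (exists j, [/\ 1 <= j <= k, x' j < x j &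
              forall i, j < i <= k -> x' i = x i]).

(* Main.v *)
Require Import Defs.
From mathcomp Require Import all_boot.
From mathcomp Require Import zify.

Fixpoint Gs (b i : nat) : nat := if i is i'.+1 then b * Gs b i' + 1 else 0.

Lemma Gs_eq b i : 1 < b -> b ^ i - 1 = (b - 1) * Gs b i.
Proof.
move=> hb; elim: i => [|i IH] /=; first by rewrite expn0 muln0.
have h1 : 0 < b ^ i by rewrite expn_gt0 (ltnW hb).
rewrite expnS; nia.
Qed.

Lemma Bnum_Gs b i : 1 < b -> Bnum b i = Gs b i.
Proof.
move=> hb; rewrite /Bnum Gs_eq // mulKn //; lia.
Qed.

Lemma Bnum_S b i : 1 < b -> Bnum b i.+1 = b * Bnum b i + 1.
Proof. by move=> hb; rewrite !Bnum_Gs. Qed.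

Lemma size_ga b i N : size (greedy_aux b i N) = i.
Proof. by elim: i N => [|i IH] N //=; rewrite size_rcons IH. Qed.

Definition Wl b i N := \sum_(l < i) b ^ l.+1 * nth 0 (greedy_aux b i N) l.

Lemma Wl_S b i N : Wl b i.+1 N =
  Wl b i (N %% Bnum b i.+1) + b ^ i.+1 * (N %/ Bnum b i.+1).
Proof.
rewrite /Wl big_ord_recr /=; congr (_ + _).
  apply: eq_bigr => l _; rewrite nth_rcons size_ga ltn_ord //.
by rewrite nth_rcons size_ga ltnn eqxx.
Qed.

Lemma Wl0 b i : 1 < b -> Wl b i 0 = 0.
Proof.
move=> hb; elim: i => [|i IH]; first by rewrite /Wl big_ord0.
by rewrite Wl_S mod0n div0n IH muln0.
Qed.

Lemma weightE b k N : weight b k N = Wl b k N.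
Proof.
rewrite /weight /Wl big_add1 /= big_mkord; apply: eq_bigr => i _.
by rewrite /greedy /=.
Qed.

Lemma WlA b i N : 1 < b -> N < Bnum b i.+1 -> Wl b i N <= b ^ i.+1.
Proof.
move=> hb; elim: i N => [|i IH] N hN; first by rewrite /Wl big_ord0.
rewrite Wl_S.
have hB : 0 < Bnum b i.+1 by rewrite Bnum_Gs //= ; lia.
have hr : N %% Bnum b i.+1 < Bnum b i.+1 by rewrite ltn_pmod.
have := IH _ hr.
move: hN; rewrite (@Bnum_S b i.+1 hb) => hN.
have hd := divn_eq N (Bnum b i.+1).
set q := N %/ Bnum b i.+1 in hd *; set r := N %% Bnum b i.+1 in hr hd *.
set B := Bnum b i.+1 in hB hr hd hN *.
have hq : q <= b by nia.
case: (ltnP q b) => hqb.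
  rewrite (expnS b i.+1); set P := b ^ i.+1; nia.
have -> : q = b by lia.
have -> : r = 0 by nia.
by rewrite Wl0 // add0n => _; rewrite !expnS mulnC mulnA.
Qed.

Lemma main b k : 1 < b -> forall N1 N2,
  colex_le k (greedy b k N1) (greedy b k N2) -> Wl b k N1 <= Wl b k N2.
Proof.
move=> hb; elim: k => [|k IH] N1 N2 hc; first by rewrite /Wl !big_ord0.
rewrite !Wl_S.
have hB : 0 < Bnum b k.+1 by rewrite Bnum_Gs //= ; lia.
have gT : forall N, greedy b k.+1 N k.+1 = N %/ Bnum b k.+1.
  by move=> N; rewrite /greedy /= nth_rcons size_ga ltnn eqxx.
have gL : forall N i, 1 <= i <= k -> greedy b k.+1 N i = greedy b k (N %% Bnum b k.+1) i.
  move=> N [|i] // /andP[_ h2].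
  by rewrite /greedy /= nth_rcons size_ga h2.
have top : (N1 %/ Bnum b k.+1 < N2 %/ Bnum b k.+1) \/
   (N1 %/ Bnum b k.+1 = N2 %/ Bnum b k.+1 /\
    colex_le k (greedy b k (N1 %% Bnum b k.+1)) (greedy b k (N2 %% Bnum b k.+1))).
  case: hc => [hall|[j [/andP[hj1 hj2] hlt hrest]]].
    right; split.
      by rewrite -!gT; apply: hall; rewrite ltnSn andbT.
    left => i hi; rewrite -!gL //; apply: hall.
    move/andP: hi => [h1 h2]; rewrite h1 /=; exact: leqW.
  case: (j =P k.+1) => [ej|nj].
    by left; move: hlt; rewrite ej !gT.
  have hjk : j <= k by lia.
  right; split.
    by rewrite -!gT; apply: hrest; rewrite ltnSn andbT; lia.
  right; exists j; split.
  - by rewrite hj1 hjk.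
  - by rewrite -!gL ?hj1 ?hjk.
  - move=> i /andP[hi1 hi2]; rewrite -!gL; first (apply: hrest; rewrite hi1; exact: leqW).
    + by rewrite hi2 andbT; lia.
    + by rewrite hi2 andbT; lia.
case: top => [hlt|[heq hc']].
  have hr : N1 %% Bnum b k.+1 < Bnum b k.+1 by rewrite ltn_pmod.
  have := @WlA b k _ hb hr.
  move=> hW; apply: (leq_trans _ (leq_addl _ _)).
  apply: (leq_trans (leq_add hW (leqnn _))).
  by rewrite addnC -mulnSr leq_mul2l hlt orbT.
rewrite heq leq_add2r; exact: IH.
Qed.

Theorem lemma3p4 (k b M r1 r2 : nat) :
  0 < k -> 2 <= b -> r1 <= M -> r2 <= M ->
  colex_le k (greedy b k r1) (greedy b k r2) ->
  weight b k r1 <= weight b k r2.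
Proof.
move=> _ hb _ _ hc; rewrite !weightE; exact: main.
Qed.
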